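(* Let $q$ be a prime such that the multiplicative order of $2$ in $(\mathbb{Z}/q\mathbb{Z})^\times$ is congruent to $2 \pmod 4$. Let $n \geq 1$ be an integer, $v = 3q^n$, and $k$ an odd positive integer. Then there are no integers $a_1, \ldots, a_k$ with $1 \leq a_j < v$ such that $\prod_{j=1}^k a_j = \prod_{j=1}^k (v - a_j)$. *)

(* Defs.v *)
From mathcomp Require Import all_boot all_order all_algebra.
Set Implicit Arguments. Unset Strict Implicit. Unset Printing Implicit Defensive.

Definition mult_order (a q m : nat) : Prop :=
  0 < m /\ a ^ m = 1 %[mod q] /\
  (forall j, 0 < j < m -> a ^ j <> 1 %[mod q]).

(* Main.v *)
Require Import Defs.
From mathcomp Require Import all_boot all_order all_algebra.
From mathcomp Require Import zify.
Import Order.TTheory GRing.Theory Num.Theory.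
Local Open Scope ring_scope.

Lemma Fp_eq (q x y : nat) : prime q ->
  ((x%:R : 'F_q) = y%:R)%R <-> (x = y %[mod q])%N.
Proof.
move=> qP; split => E.
  by rewrite -!(val_Fp_nat qP) E.
by apply: val_inj; rewrite /= !(val_Fp_nat qP).
Qed.

Lemma two_pow (q ord2 : nat) :
  prime q -> mult_order 2 q ord2 -> (ord2 %% 4 = 2)%N ->
  exists m, odd m /\ ((2%:R : 'F_q) ^+ m = -1)%R.
Proof.
move=> qP [o0 [Ho Hmin]] H4.
have Hd := divn_eq ord2 4; rewrite H4 in Hd.
set m := (2 * (ord2 %/ 4)).+1.
have om : odd m by rewrite /m /= mul2n odd_double.
exists m; split => //.
have e2 : ord2 = (m * 2)%N by rewrite /m; lia.
have Hy1 : ((2 ^ m)%:R : 'F_q) != 1%R.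
  apply/eqP => E; apply: (Hmin m); first by (apply/andP; split; lia).
  by apply: (proj1 (Fp_eq q (2 ^ m)%N 1 qP)); rewrite E.
have Hyy : ((2 ^ m)%:R * (2 ^ m)%:R : 'F_q)%R = 1%R.
  by rewrite -natrM -expnD addnn -mul2n mulnC -e2; apply: (proj2 (Fp_eq q _ 1 qP)).
rewrite -natrX.
have : (((2 ^ m)%:R - 1) * ((2 ^ m)%:R + 1) : 'F_q)%R = 0%R.
  by rewrite mulrDr mulr1 mulrBl Hyy mul1r addrA subrK subrr.
move/eqP; rewrite mulf_eq0 subr_eq0 (negbTE Hy1) /= addr_eq0 => /eqP.
done.
Qed.

Lemma decomp (q n m A B : nat) : prime q -> (2 < q)%N -> odd m ->
  (2%:R : 'F_q) ^+ m = -1 -> (0 < A)%N -> (0 < B)%N -> (A + B = 3 * q ^ n)%N ->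
  let g := (q ^ minn (logn q A) n)%N in
  (g %| A)%N /\ (g %| B)%N /\ ~~ (q %| A %/ g)%N /\
  (((B %/ g)%:R : 'F_q) ^+ m = - ((A %/ g)%:R) ^+ m).
Proof.
move=> qP q2 om H2 A0 B0 HAB g.
have q0 := prime_gt0 qP.
have g0 : (0 < g)%N by rewrite /g expn_gt0 q0.
have gA : (g %| A)%N by rewrite /g pfactor_dvdn // geq_minl.
have gV : (g %| 3 * q ^ n)%N by apply: dvdn_mull; rewrite /g dvdn_exp2l // geq_minr.
have gB : (g %| B)%N by rewrite -(dvdn_addr _ gA) HAB.
set a' := (A %/ g)%N; set b' := (B %/ g)%N.
have hA : A = (a' * g)%N by rewrite divnK.
have hB : B = (b' * g)%N by rewrite divnK.
have hs : (a' + b' = 3 * q ^ n %/ g)%N by rewrite -HAB divnDl.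
do 2 (split=> //).
case: (ltnP (logn q A) n) => hL.
  have eg : g = (q ^ logn q A)%N by rewrite /g (minn_idPl (ltnW hL)).
  have hs' : (a' + b' = 3 * q ^ (n - logn q A))%N.
    rewrite hs eg -{1}(subnK (ltnW hL)) expnD mulnA mulnK //.
  split.
    apply/negP => qa.
    have : (q * g %| A)%N by rewrite [X in (_ %| X)%N]hA dvdn_pmul2r.
    by rewrite eg -expnS pfactor_dvdn // ltnn.
  have : ((a' + b')%:R : 'F_q) = 0.
    apply/eqP; rewrite -(dvdn_pcharf (pchar_Fp qP)) hs'.
    apply: dvdn_mull; apply: dvdn_exp => //; first by rewrite subn_gt0.
  rewrite natrD => /eqP; rewrite addr_eq0 => /eqP->.
  by rewrite exprNn -signr_odd om expr1 mulN1r opprK.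
have eg : g = (q ^ n)%N by rewrite /g (minn_idPr hL).
have hs' : (a' + b' = 3)%N by rewrite hs eg mulnK // expn_gt0 q0.
have a0 : (0 < a')%N by move: A0; rewrite hA; case: (a').
have b0 : (0 < b')%N by move: B0; rewrite hB; case: (b').
have [ea|ea] : a' = 1%N \/ a' = 2%N by lia.
  have -> : b' = 2%N by lia.
  rewrite ea; split; first by apply/negP => /dvdn_leq; lia.
  by rewrite H2 mulr1n expr1n.
have -> : b' = 1%N by lia.
rewrite ea; split; first by apply/negP => /dvdn_leq; lia.
by rewrite H2 mulr1n expr1n opprK.
Qed.

Local Close Scope ring_scope.
Theorem corollary4p12 (q n k : nat) (ord2 : nat) :
  prime q -> mult_order 2 q ord2 -> ord2 %% 4 = 2 ->
  1 <= n -> odd k ->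
  let v : int := Posz (3 * q ^ n) in
  ~ (exists a : 'I_k -> int,
       (forall j, 1 <= a j < v)%R /\
       (\prod_(j < k) a j = \prod_(j < k) (v - a j))%R).
Proof.
Local Open Scope ring_scope.
move=> qP Hord H4 n1 kodd v [a [Ha Heq]].
have [m [om H2]] := @two_pow q ord2 qP Hord H4.
have q2 : (2 < q)%N.
  have q1 := prime_gt1 qP.
  have : q != 2%N.
    apply/eqP => e; move: Hord; rewrite e => -[o0 [Ho _]].
    move: o0 Ho; case: (ord2) => // o _.
    by rewrite expnS -modnMml modnn mul0n mod0n.
  lia.
set V := (3 * q ^ n)%N.
pose A j := `|a j|%N.
pose B j := `|v - a j|%N.
have eA j : (A j)%:Z = a j.
  by rewrite /A gez0_abs //; case/andP: (Ha j) => h _; apply: le_trans h.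
have eB j : (B j)%:Z = v - a j.
  by rewrite /B gez0_abs //; case/andP: (Ha j) => _ h; rewrite subr_ge0 ltW.
have A0 j : (0 < A j)%N.
  by rewrite -ltz_nat eA; case/andP: (Ha j) => h _; apply: lt_le_trans h.
have B0 j : (0 < B j)%N.
  by rewrite -ltz_nat eB; case/andP: (Ha j) => _ h; rewrite subr_gt0.
have AB j : (A j + B j = V)%N.
  have : Posz (A j + B j) = Posz V by rewrite PoszD eA eB addrC subrK.
  by case.
have Hn : (\prod_(j < k) A j = \prod_(j < k) B j)%N.
  have := congr1 absz Heq.
  by rewrite !(@big_morph nat int absz 1%N muln 1%R *%R abszM erefl).
pose g j := (q ^ minn (logn q (A j)) n)%N.
have D j := @decomp q n m (A j) (B j) qP q2 om H2 (A0 j) (B0 j) (AB j).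
pose a' j := (A j %/ g j)%N.
pose b' j := (B j %/ g j)%N.
have Hab : (\prod_(j < k) a' j = \prod_(j < k) b' j)%N.
  have G0 : (0 < \prod_(j < k) g j)%N by apply: prodn_gt0 => j; rewrite expn_gt0 prime_gt0.
  apply/eqP; rewrite -(eqn_pmul2r G0) -!big_split /=.
  rewrite (eq_bigr A); last by move=> j _; rewrite /a' divnK //; case: (D j).
  rewrite [X in (_ == X)%N](eq_bigr B); last by move=> j _; rewrite /b' divnK //; case: (D j) => _ [].
  by rewrite Hn.
pose X := \prod_(j < k) ((a' j)%:R : 'F_q) ^+ m.
have X0 : X != 0.
  apply/prodf_neq0 => j _; apply: expf_neq0.
  by rewrite -(dvdn_pcharf (pchar_Fp qP)); case: (D j) => _ [_ []].
have XX : X = - X.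
  have := congr1 (fun x => (x%:R : 'F_q) ^+ m) Hab => /=.
  rewrite !natr_prod -!prodrXl -/X.
  rewrite (eq_bigr (fun j => - ((a' j)%:R ^+ m))); last by move=> j _; case: (D j) => _ [_ []].
  by rewrite prodrN cardT size_enum_ord -signr_odd kodd expr1 mulN1r.
have : (2%:R : 'F_q) * X = 0 by rewrite mulr2n mulrDl mul1r {2}XX subrr.
apply/eqP; rewrite mulf_eq0 negb_or X0 andbT -(dvdn_pcharf (pchar_Fp qP)).
by apply/negP => /dvdn_leq; lia.
Qed.
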